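(* Let $F$ be an algebraically closed field of positive characteristic $p$, and let $\phi \in F(z)$ be a unicritical rational function. Then $\deg(\phi) \equiv 0$ or $1 \pmod p$.
   Context: A rational function $\phi \in F(z)$ is unicritical if it is nonconstant and has exactly one critical point in $\mathbb{P}^1(F)$. Critical points: for $x \in F$, choose a fractional linear transformation $\sigma$ over $F$ with $\sigma(\phi(x)) \neq \infty$; $x$ is a critical point if $\frac{d(\sigma\circ\phi)}{dz}(x) = 0$; $\infty$ is a critical point if $\frac{d(\sigma \circ \phi(1/z))}{dz}\big|_{z=0} = 0$ for such $\sigma$ with $\sigma(\phi(\infty))\neq\infty$. The degree of $\phi = f/g$ with $f,g$ coprime is $\max(\deg f, \deg g)$. *)

(* Defs.v *)
From mathcomp Require Import all_boot all_algebra.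
Set Implicit Arguments. Unset Strict Implicit. Unset Printing Implicit Defensive.
Import GRing.Theory.
Local Open Scope ring_scope.

(* A rational function phi = f / g in F(z) is represented by a pair (f, g)
   of polynomials with g != 0 and f, g coprime (hypotheses of the theorem). *)

Section RatFun.
Variable F : fieldType.
Implicit Types (f g P Q : {poly F}) (x a b c d : F).

Definition ratf_deg f g : nat := maxn (size f).-1 (size g).-1.

Definition ratf_const f g : Prop := exists c : F, f = c *: g.

(* z^n p(1/z) for deg p <= n *)
Definition rev_to (n : nat) P : {poly F} := \poly_(i < n.+1) P`_(n - i).

Definition ratf_deriv_at P Q x : F :=
  (P^`() * Q - P * Q^`()).[x] / (Q.[x] ^+ 2).

(* sigma(w) = (a w + b) / (c w + d) is a fractional linear transformation *)
Definition is_fltrans a b c d : bool := a * d - b * c != 0.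

(* sigma o (P/Q) = (a P + b Q)/(c P + d Q); sigma(phi(x)) <> oo iff
   (c P + d Q).[x] != 0 (P, Q have no common zero). *)
Definition crit_with P Q x : Prop :=
  exists a b c d, [/\ is_fltrans a b c d,
    (c *: P + d *: Q).[x] != 0 &
    ratf_deriv_at (a *: P + b *: Q) (c *: P + d *: Q) x = 0].

(* critical points in P^1(F) = option F (None = infinity);
   phi(1/z) = rev_to n f / rev_to n g with n = deg phi *)
Definition ratf_critical f g (pt : option F) : Prop :=
  match pt with
  | Some x => crit_with f g x
  | None => crit_with (rev_to (ratf_deg f g) f) (rev_to (ratf_deg f g) g) 0
  end.

Definition unicritical f g : Prop :=
  ~ ratf_const f g /\
  exists pt : option F, forall q : option F, ratf_critical f g q <-> q = pt.

End RatFun.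

(* Main.v *)
Require Import Defs.
From mathcomp Require Import all_boot all_algebra.
From mathcomp Require Import zify ring.
From Stdlib Require Import Lia.
Import GRing.Theory.
Local Open Scope ring_scope.
Set Implicit Arguments.

Section Aux.
Variable F : fieldType.
Implicit Types (p q h : {poly F}).

Lemma size_deriv_le p m : (size p <= m.+1)%N -> (size p^`() <= m)%N.
Proof.
move/leq_sizeP=> H; apply/leq_sizeP=> j hj.
by rewrite coef_deriv H ?mul0rn.
Qed.

Lemma coefM_hi p q s t i : (size p <= s.+1)%N -> (size q <= t.+1)%N ->
  i = (s + t)%N -> (p * q)`_i = p`_s * q`_t.
Proof.
move=> /leq_sizeP Hp /leq_sizeP Hq ->; rewrite coefM.
rewrite (bigD1 (inord s)) /=; last by [].
rewrite inordK; last by lia.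
rewrite big1 ?addr0; first by rewrite addKn.
move=> j /eqP hj.
have hjs : nat_of_ord j != s.
  apply/eqP=> e; apply: hj; apply/val_inj; rewrite /= inordK; [exact: e|lia].
case: (ltngtP j s) => [lt|gt|eq].
- by rewrite (Hq (s + t - j)%N) ?mulr0 //; lia.
- by rewrite Hp ?mul0r.
- by rewrite eq eqxx in hjs.
Qed.

Lemma coefM_hi1 p q s t i : (size p <= s.+2)%N -> (size q <= t.+2)%N ->
  i = (s + t).+1%N -> (p * q)`_i = p`_s * q`_t.+1 + p`_s.+1 * q`_t.
Proof.
move=> /leq_sizeP Hp /leq_sizeP Hq ->; rewrite coefM.
rewrite (bigD1 (inord s)) /=; last by [].
rewrite (bigD1 (inord s.+1)) /=; last first.
  apply/eqP=> e; have := congr1 val e; rewrite /= !inordK; lia.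
rewrite !inordK; try lia.
rewrite big1 ?addr0.
  have -> : ((s + t).+1 - s = t.+1)%N by lia.
  by have -> : ((s + t).+1 - s.+1 = t)%N by lia.
move=> j /andP [/eqP h1 /eqP h2].
have hjs : nat_of_ord j != s.
  apply/eqP=> e; first [ (apply: h1; apply/val_inj; rewrite /= inordK; [exact: e|lia]) | (apply: h2; apply/val_inj; rewrite /= inordK; [exact: e|lia]) ].
have hjs1 : nat_of_ord j != s.+1.
  apply/eqP=> e; first [ (apply: h1; apply/val_inj; rewrite /= inordK; [exact: e|lia]) | (apply: h2; apply/val_inj; rewrite /= inordK; [exact: e|lia]) ].
case: (ltngtP j s) => [lt|gt|eq].
- by rewrite (Hq ((s + t).+1 - j)%N) ?mulr0 //; lia.
- by rewrite Hp ?mul0r //; lia.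
- by rewrite eq eqxx in hjs.
Qed.


Definition Wr p q := p^`() * q - p * q^`().

Lemma crit_of_W p q x : (p.[x] != 0) || (q.[x] != 0) -> (Wr p q).[x] = 0 ->
  crit_with p q x.
Proof.
rewrite /Wr => /orP [hp|hq] hW.
  have [hq|hq] := eqVneq q.[x] 0.
    exists 0, 1, 1, 0; split.
    - by rewrite /is_fltrans !mul0r mulr1 sub0r oppr_eq0 oner_eq0.
    - by rewrite scale1r scale0r addr0.
    rewrite /ratf_deriv_at !scale1r !scale0r addr0 add0r.
    move: hW; rewrite !hornerE => hW.
    have -> : q^`().[x] * p.[x] - q.[x] * p^`().[x] = - (p^`().[x] * q.[x] - p.[x] * q^`().[x]) by ring.
    by rewrite hW oppr0 mul0r.
  exists 1, 0, 0, 1; split.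
  - by rewrite /is_fltrans !mul0r mulr1 subr0 oner_eq0.
  - by rewrite scale1r scale0r add0r.
  rewrite /ratf_deriv_at !scale1r !scale0r addr0 add0r.
  by move: hW; rewrite !hornerE => ->; rewrite mul0r.
exists 1, 0, 0, 1; split.
- by rewrite /is_fltrans !mul0r mulr1 subr0 oner_eq0.
- by rewrite scale1r scale0r add0r.
rewrite /ratf_deriv_at !scale1r !scale0r addr0 add0r.
by move: hW; rewrite !hornerE => ->; rewrite mul0r.
Qed.

Definition Ek (k : nat) h := 'X * ('X * h^`()^`()) - ('X * h^`()) *+ k.

Lemma coef_Ek k h i : (Ek k h)`_i = h`_i * (i%:R * (i%:R - 1) - k%:R * i%:R).
Proof.
rewrite /Ek coefB coefMn !coefXM.
case: i => [|[|j]] /=.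
- by rewrite !mulr_natr; ring.
- by rewrite !coef_deriv !mulr_natr; ring.
- rewrite !coef_deriv !mulr_natr -!natr1.
  ring.
Qed.

Lemma Ek0 k h : (Ek k h).[0] = 0.
Proof. by rewrite horner_coef0 coef_Ek mul0r mulr0 subrr mulr0. Qed.

Lemma Ek_size k h n : (size h <= n.+1)%N ->
  (size (Ek k h - (n%:R * (n%:R - 1) - k%:R * n%:R) *: h)%R <= n)%N.
Proof.
move/leq_sizeP=> H; apply/leq_sizeP=> j hj.
rewrite coefB coefZ coef_Ek.
case: (ltngtP j n) => [lt|gt|->]; first by lia.
  by rewrite H // mul0r mulr0 subrr.
by rewrite mulrC subrr.
Qed.


Lemma key_lemma (f g : {poly F}) n (lam : F) (E : {poly F} -> {poly F}) :
  coprimep f g -> f != 0 -> g != 0 -> (size f <= n.+1)%N -> (size g <= n.+1)%N ->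
  (size f = n.+1 \/ size g = n.+1) ->
  E f * g = f * E g ->
  (forall h, (size h <= n.+1)%N -> (size (E h - lam *: h)%R <= n)%N) ->
  (forall h, (E h).[0] = 0) -> lam = 0.
Proof.
move=> cop f0 g0 sf sg sfg Hid Hs H0.
apply/eqP; apply: contraT => hl.
have A : forall h, size h = n.+1 -> h %| E h -> E h = lam *: h.
  move=> h sh dh; apply/eqP; rewrite -subr_eq0; apply: contraT => R0.
  have : h %| E h - lam *: h.
    by rewrite dvdp_sub // -mul_polyC dvdp_mull.
  move/(dvdp_leq R0); rewrite sh => le.
  by have := leq_trans le (Hs h (eq_leq sh)); rewrite ltnn.
have fin : E f = lam *: f /\ E g = lam *: g.
  case: sfg => [sf1|sg1].
    have hf : E f = lam *: f.
      apply: A => //; rewrite -(Gauss_dvdpl _ cop) Hid; exact: dvdp_mulIl.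
    split=> //; apply: (mulfI f0).
    by rewrite -Hid hf -scalerAr scalerAl.
  have hg : E g = lam *: g.
    have cop' : coprimep g f by rewrite coprimep_sym.
    apply: A => //; rewrite -(Gauss_dvdpr _ cop') -Hid.
    exact: dvdp_mulIr.
  split=> //; apply: (mulIf g0).
  by rewrite Hid hg -scalerAr scalerAl.
case: fin => hf hg.
have := H0 f; have := H0 g; rewrite hf hg !hornerZ => /eqP eg /eqP ef.
move: eg ef; rewrite !mulf_eq0 (negbTE hl) /= => rg rf.
by move: (coprimep_root cop rf); rewrite (eqP rg) eqxx.
Qed.

End Aux.

Section Closed.
Variable F : closedFieldType.
Implicit Types (p q f g h : {poly F}).

Lemma coprime_noroot f g : (forall x, ~~ (root f x && root g x)) -> coprimep f g.
Proof.
move=> H; rewrite coprimep_def; apply: contraT => /closed_rootP [x].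
by rewrite root_gcd => hx; have := H x; rewrite hx.
Qed.

Lemma not_both f g x : coprimep f g -> (f.[x] != 0) || (g.[x] != 0).
Proof.
move=> cop; case: (eqVneq f.[x] 0) => [h|h] //=.
by apply: coprimep_root cop _; apply/eqP.
Qed.

Lemma prod_nseq k (a : F) : \prod_(z <- nseq k a) ('X - z%:P) = ('X - a%:P) ^+ k.
Proof. by elim: k => [|k IH]; rewrite ?big_nil ?expr0 // big_cons IH exprS. Qed.

Definition Tr (x0 : F) : {poly F} := 'X + x0%:P.

Lemma W_comp f g x0 : Wr (f \Po Tr x0) (g \Po Tr x0) = Wr f g \Po Tr x0.
Proof.
rewrite /Wr /Tr !deriv_comp derivD derivX derivC addr0 !mulr1.
by rewrite comp_polyB !comp_polyM.
Qed.

Lemma XsubC_comp x0 k : ('X - x0%:P) ^+ k \Po Tr x0 = 'X ^+ k.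
Proof.
elim: k => [|k IH]; first by rewrite !expr0 comp_polyC.
by rewrite !exprS comp_polyM IH comp_polyB comp_polyX comp_polyC /Tr addrK.
Qed.

Lemma Ek_identity f1 g1 (c : F) k : Wr f1 g1 = c *: 'X^k ->
  Ek k f1 * g1 = f1 * Ek k g1.
Proof.
move=> hD.
have e1 : (Wr f1 g1)^`() = f1^`()^`() * g1 - f1 * g1^`()^`().
  by rewrite /Wr derivB !derivM; ring.
have e2 : 'X * (Wr f1 g1)^`() = Wr f1 g1 *+ k.
  rewrite hD derivZ derivXn; clear hD; case: k => [|k]; first by rewrite !mulr0n scaler0 mulr0.
  by rewrite -scalerAr mulrnAr -exprS scalerMnr.
apply/eqP; rewrite -subr_eq0; apply/eqP.
have -> : Ek k f1 * g1 - f1 * Ek k g1 = 'X * ('X * (Wr f1 g1)^`() - Wr f1 g1 *+ k).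
  rewrite e1 /Wr /Ek; ring.
by rewrite e2 subrr mulr0.
Qed.

End Closed.

Unset Implicit Arguments.

Theorem corollary1p3 (F : closedFieldType) (p : nat) (f g : {poly F}) :
  p \in [pchar F] -> g != 0 -> coprimep f g -> unicritical f g ->
  (ratf_deg f g %% p = 0 \/ ratf_deg f g %% p = 1)%N.
Proof.
move=> hp g0 cop [Hnc [pt Hpt]].
have p1 : (1 < p)%N := prime_gt1 (pcharf_prime hp).
have f0 : f != 0.
  by apply/eqP=> e; apply: Hnc; exists 0; rewrite e scale0r.
have sf0 : (0 < size f)%N by rewrite size_poly_gt0.
have sg0 : (0 < size g)%N by rewrite size_poly_gt0.
have [sf [sg sfg]] : [/\ (size f <= (ratf_deg f g).+1)%N,
   (size g <= (ratf_deg f g).+1)%N &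
   size f = (ratf_deg f g).+1 \/ size g = (ratf_deg f g).+1].
  rewrite /ratf_deg; move: sf0 sg0; case: (size f) => // a; case: (size g) => // b _ _ /=.
  split; lia.
set n := ratf_deg f g in sf sg sfg *.
case: (ltnP n 2) => [lt2|ge2].
  have : n = 0%N \/ n = 1%N by lia.
  by case=> ->; [left; apply: mod0n | right; apply: modn_small].
have [m Em] : exists m, n = m.+2 by exists n.-2; lia.
pose W := Wr f g.
have noncrit : forall x, Some x <> pt -> W.[x] != 0.
  move=> x hx; apply/eqP => hW; apply: hx; apply/Hpt => /=.
  by apply: crit_of_W => //; apply: not_both.
pose x0 := if pt is Some x then x else 0.
have noncrit2 : forall x, x != x0 -> W.[x] != 0.
  move=> x hx; apply: noncrit => ex; move: hx; rewrite /x0 -ex /= eqxx. by [].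
have W0 : W != 0.
  have h1 : x0 + 1 != x0 by rewrite -subr_eq0 addrC addKr oner_eq0.
  by apply/eqP => ew; move: (noncrit2 _ h1); rewrite ew horner0 eqxx.
have [r Hr] := closed_field_poly_normal W.
have hr : r = nseq (size r) x0.
  apply/all_pred1P; apply/allP => z zr /=; apply: contraT => hz.
  have := noncrit2 z hz; rewrite Hr hornerZ.
  by move: zr; rewrite -root_prod_XsubC => /eqP ->; rewrite mulr0 eqxx.
set k := size r in hr.
set c := lead_coef W in Hr.
have c0 : c != 0 by rewrite /c lead_coef_eq0.
rewrite hr prod_nseq in Hr.
have hk : k = 0%N \/ k = (2 * m.+1)%N.
  case Ept: pt => [y|].
    have nc : ~ ratf_critical f g None by move/Hpt; rewrite Ept.
    rewrite /= -/n in nc.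
    have rc : forall (h : {poly F}) i, (i <= n)%N -> (rev_to n h)`_i = h`_(n - i)%N.
      by move=> h i hi; rewrite coef_poly ltnS hi.
    have hinf : f`_m.+1 * g`_m.+2 - f`_m.+2 * g`_m.+1 != 0.
      apply/eqP => e; apply: nc; apply: crit_of_W.
        rewrite !horner_coef0 !rc // subn0.
        case: sfg => h; apply/orP; [left|right];
          by rewrite -[n]/((n.+1).-1) -h -lead_coefE lead_coef_eq0.
      rewrite /Wr !hornerE !horner_coef0 !coef_deriv !rc ?Em // subn0 subn1 /= !mulr1n.
    have hn : (m.+2)%:R = (m.+1)%:R + 1 :> F by rewrite natr1.
    have sf' : (size f^`() <= m.+2)%N by apply: size_deriv_le; rewrite -Em.
    have sg' : (size g^`() <= m.+2)%N by apply: size_deriv_le; rewrite -Em.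
    rewrite Em in sf sg.
    have c22 : W`_(2 * m + 2) != 0.
      have E : W`_(2 * m + 2) = - (f`_m.+1 * g`_m.+2 - f`_m.+2 * g`_m.+1).
        rewrite /W /Wr coefB (@coefM_hi1 _ _ _ m m.+1) //; last by lia.
        rewrite (@coefM_hi1 _ _ _ m.+1 m) //; last by lia.
        rewrite !coef_deriv; ring.
      by rewrite E oppr_eq0.
    have c23 : W`_(2 * m + 3) = 0.
      rewrite /W /Wr coefB (@coefM_hi _ _ _ m.+1 m.+2) //; last by lia.
      rewrite (@coefM_hi _ _ _ m.+2 m.+1) //; last by lia.
      by rewrite !coef_deriv; ring.
    have sW : (size W <= 2 * m + 4)%N.
      apply/leq_sizeP => j hj; rewrite /W /Wr coefB.
      have h1 := size_polyMleq f^`() g; have h2 := size_polyMleq f g^`().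
      rewrite (leq_sizeP _ _ (leq_trans h1 (_ : _ <= 2 * m + 4)%N) j hj); last by lia.
      by rewrite (leq_sizeP _ _ (leq_trans h2 (_ : _ <= 2 * m + 4)%N) j hj) ?subr0 //; lia.
    have sWk : size W = k.+1 by rewrite Hr size_scale // size_exp_XsubC.
    have Wk : W`_k = c by rewrite /c lead_coefE sWk.
    right; apply/eqP; rewrite eqn_leq; apply/andP; split.
      apply: contraT; rewrite -ltnNge => lt.
      case: (eqVneq k (2 * m + 3)%N) => ek.
        by move: c0; rewrite -Wk ek c23 eqxx.
      by move: sW; rewrite sWk; lia.
    apply: contraT; rewrite -ltnNge => lt.
    move: c22; rewrite (leq_sizeP _ _ (_ : size W <= 2 * m + 2)%N) ?eqxx //.
    by rewrite sWk; lia.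
  left; have := noncrit x0; rewrite Ept => /(_ (fun e => ltac:(discriminate))).
  rewrite Hr hornerZ horner_exp hornerXsubC subrr expr0n.
  by case: (@eqP _ k 0%N) => [//|_]; rewrite /= mulr0n mulr0 eqxx.
pose f1 := f \Po (@Tr F x0); pose g1 := g \Po (@Tr F x0).
have sz : forall h : {poly F}, size (h \Po (@Tr F x0)) = size h.
  by move=> h; rewrite size_comp_poly2 // size_XaddC.
have ev : forall (h : {poly F}) y, (h \Po (@Tr F x0)).[y] = h.[y + x0].
  by move=> h y; rewrite horner_comp /Tr hornerD hornerX hornerC.
have cop1 : coprimep f1 g1.
  apply: coprime_noroot => y; rewrite /root !ev.
  by have := @not_both _ f g (y + x0) cop; rewrite negb_and.
have f10 : f1 != 0 by rewrite -size_poly_gt0 sz size_poly_gt0.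
have g10 : g1 != 0 by rewrite -size_poly_gt0 sz size_poly_gt0.
have hD : Wr f1 g1 = c *: 'X^k.
  by rewrite W_comp -/W Hr comp_polyZ XsubC_comp.
have lam0 := @key_lemma F f1 g1 n (n%:R * (n%:R - 1) - k%:R * n%:R) (Ek k)
  cop1 f10 g10 (leq_trans (eq_leq (sz f)) sf) (leq_trans (eq_leq (sz g)) sg)
  (ltac:(by rewrite !sz)) (@Ek_identity _ f1 g1 c k hD) (fun h hh => @Ek_size _ k h n hh) (@Ek0 _ k).
have hn : (m.+2)%:R = (m.+1)%:R + 1 :> F by rewrite natr1.
have prod0 : (m.+2)%:R * (m.+1)%:R = 0 :> F.
  move: lam0; rewrite Em hn; case: hk => -> h.
    by rewrite -h; ring.
  have : - ((m.+1%:R + 1) * m.+1%:R) = 0 :> F by rewrite -h natrM; ring.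
  by move/eqP; rewrite oppr_eq0 -hn => /eqP.
rewrite Em; move/eqP: prod0; rewrite mulf_eq0 -!(dvdn_pcharf hp) => /orP [h|h].
  by left; apply/eqP.
right; rewrite -[m.+2]addn1 -modnDml (eqP h) add0n modn_small //.
Qed.
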